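(* Let $R$ be a commutative unital ring with $\operatorname{sr}(R) \le 2$ and let $I$ be an ideal of $R$. Then the natural map $\operatorname{SK}_1(R) \to \operatorname{SK}_1(R/I)$ is surjective.
   Context: The Bass stable rank: a row $(r_1,\dots,r_n)\in R^n$ is unimodular if $\sum_i Rr_i=R$; a unimodular row $(r_1,\dots,r_{n+1})$ is stable if there exist $s_i\in R$ with $(r_1+s_1r_{n+1},\dots,r_n+s_nr_{n+1})$ unimodular; $\operatorname{sr}(R)$ is the least $n>0$ such that every unimodular row of length $n+1$ is stable. $\operatorname{E}_n(R)$ is the subgroup of $\operatorname{SL}_n(R)$ generated by elementary matrices $I_n + a\epsilon_{ij}$ ($a\in R$, $i\ne j$). $\operatorname{SL}(R)=\bigcup_n\operatorname{SL}_n(R)$ and $\operatorname{E}(R)=\bigcup_n\operatorname{E}_n(R)$ via the embeddings $A\mapsto\begin{pmatrix}A&0\\0&1\end{pmatrix}$; $\operatorname{E}(R)$ is normal in $\operatorname{SL}(R)$ and $\operatorname{SK}_1(R)=\operatorname{SL}(R)/\operatorname{E}(R)$. *)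

(* Defs.v *)
From HB Require Import structures.
From mathcomp Require Import all_boot all_order all_algebra.
Set Implicit Arguments. Unset Strict Implicit. Unset Printing Implicit Defensive.
Import GRing.Theory.
Local Open Scope ring_scope.

Definition unimodular (R : comPzRingType) (n : nat) (r : 'rV[R]_n) : Prop :=
  exists s : 'rV[R]_n, \sum_(i < n) s 0 i * r 0 i = 1.

Definition stable_row (R : comPzRingType) (n : nat) (r : 'rV[R]_n.+1) : Prop :=
  exists s : 'rV[R]_n,
    unimodular (\row_(i < n) (r 0 (widen_ord (leqnSn n) i) + s 0 i * r 0 ord_max)).

Definition sr_prop (R : comPzRingType) (n : nat) : Prop :=
  forall r : 'rV[R]_n.+1, unimodular r -> stable_row r.

(* sr(R) <= m : the least n > 0 with sr_prop R n exists and is <= m,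
   i.e. some n with 0 < n <= m satisfies sr_prop R n. *)
Definition sr_le (R : comPzRingType) (m : nat) : Prop :=
  exists n : nat, (0 < n <= m)%N /\ sr_prop R n.

Definition elem_mx (R : comPzRingType) (n : nat) (i j : 'I_n) (a : R) : 'M[R]_n :=
  1%:M + a *: delta_mx i j.

(* E_n(R): subgroup of SL_n(R) generated by elementary matrices.  Since
   (I + a e_ij)^{-1} = I - a e_ij is again elementary, it is the set of finite
   products of elementary matrices (empty product = identity). *)
Inductive En (R : comPzRingType) (n : nat) : 'M[R]_n -> Prop :=
  | En_one : En 1%:M
  | En_mul (A : 'M[R]_n) (i j : 'I_n) (a : R) :
      En A -> i != j -> En (A *m elem_mx i j a).

Definition stab_entry (R : comPzRingType) (n : nat) (B : 'M[R]_n) (i j : nat) : R :=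
  match @insub nat (fun k => k < n)%N _ i, @insub nat (fun k => k < n)%N _ j with
  | Some i', Some j' => B i' j'
  | _, _ => ((i == j) : nat)%:R
  end.

(* image of B : 'M_n in 'M_k (for n <= k) under the embeddings A |-> diag(A,1) *)
Definition stab (R : comPzRingType) (n k : nat) (B : 'M[R]_n) : 'M[R]_k :=
  \matrix_(i < k, j < k) stab_entry B i j.

Definition is_ideal (R : comPzRingType) (I : R -> Prop) : Prop :=
  [/\ I 0, (forall x y, I x -> I y -> I (x + y)) & (forall a x, I x -> I (a * x))].

(* Main.v *)
Require Import Defs.
From HB Require Import structures.
From mathcomp Require Import all_boot all_order all_algebra.
From mathcomp Require Import ring zify.
Set Implicit Arguments. Unset Strict Implicit. Unset Printing Implicit Defensive.
Import GRing.Theory.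
Local Open Scope ring_scope.

Lemma widen_neq_max n (i : 'I_n) : (widen_ord (leqnSn n) i == ord_max) = false.
Proof. apply/negbTE; apply/eqP => /(congr1 val) /= h; have := ltn_ord i; lia. Qed.

Definition extr (T : comPzRingType) k (v : 'rV[T]_k) (z : T) : 'rV[T]_k.+1 :=
  \row_(i < k.+1) (if (insub (val i) : option 'I_k) is Some j then v 0 j else z).

Lemma extr_w (T : comPzRingType) k (v : 'rV[T]_k) z (j : 'I_k) :
  extr v z 0 (widen_ord (leqnSn k) j) = v 0 j.
Proof. by rewrite /extr mxE /= valK. Qed.

Lemma extr_max (T : comPzRingType) k (v : 'rV[T]_k) z :
  extr v z 0 ord_max = z.
Proof. by rewrite /extr mxE /= insubN //= ltnn. Qed.

Lemma sr_mono (R : comPzRingType) n : sr_prop R n -> sr_prop R n.+1.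
Proof.
move=> hsr r [x hx].
pose b := r 0 ord_max.
pose a := \row_(i < n.+1) r 0 (widen_ord (leqnSn _) i).
pose r' := extr (\row_(i < n) a 0 (widen_ord (leqnSn _) i))
   (x 0 (widen_ord (leqnSn _) ord_max) * a 0 ord_max + x 0 ord_max * b).
have ur' : unimodular r'.
  exists (extr (\row_(i < n) x 0 (widen_ord (leqnSn _) (widen_ord (leqnSn _) i))) 1).
  rewrite big_ord_recr /= !extr_max mul1r.
  under eq_bigr do rewrite !extr_w !mxE.
  rewrite -hx big_ord_recr /= big_ord_recr /= addrA /a !mxE; congr (_ + _ + _).
have [s [z hz]] := hsr r' ur'.
exists (\row_(i < n.+1) (if (insub (val i) : option 'I_n) is Some j then s 0 j * x 0 ord_max else 0)).
exists (extr z (\sum_(i < n) z 0 i * s 0 i * x 0 (widen_ord (leqnSn _) ord_max))).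
rewrite -hz big_ord_recr /= extr_max !mxE /= insubN ?ltnn // mul0r addr0.
under eq_bigr do rewrite extr_w !mxE /= valK.
rewrite /r'; under [in RHS]eq_bigr => i _ do rewrite !mxE /= valK !mxE.
rewrite big_distrl /= -big_split /=; apply: eq_bigr => i _.
rewrite /a /b ?mxE; ring.
Qed.

Lemma sr_mono_le (R : comPzRingType) n m : sr_prop R n -> (n <= m)%N -> sr_prop R m.
Proof.
move=> h; elim: m => [|m IH]; first by rewrite leqn0 => /eqP <-.
rewrite leq_eqVlt => /orP [/eqP <- //|]; rewrite ltnS => /IH; exact: sr_mono.
Qed.

Lemma lift_unimod (R S : comPzRingType) (f : {rmorphism R -> S}) (g : S -> R)
  (hg : forall y, f (g y) = y) m : sr_prop R m.+1 ->
  forall r : 'rV[S]_m.+1, unimodular r ->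
  exists a : 'rV[R]_m.+1, map_mx f a = r /\ unimodular a.
Proof.
move=> hsr r [s hs].
pose a0 := \row_i g (r 0 i).
pose t := \sum_i g (s 0 i) * a0 0 i - 1.
have ub : unimodular (extr a0 t).
  exists (extr (\row_i g (s 0 i)) (-1)).
  rewrite big_ord_recr /= !extr_max.
  under eq_bigr do rewrite !extr_w !mxE.
  rewrite /t /a0. have -> : \sum_i g (s 0 i) * (\row_i0 g (r 0 i0)) 0 i = \sum_(i < m.+1) g (s 0 i) * g (r 0 i) by apply: eq_bigr => i _; rewrite mxE.
  ring.
have [u hu] := hsr _ ub.
exists (\row_(i < m.+1) (a0 0 i + u 0 i * t)); split; last first.
  by move: hu; congr unimodular; apply/matrixP => i j; rewrite !mxE /= valK insubN ?ltnn // ?mxE.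
have ft : f t = 0.
  rewrite /t rmorphB rmorph1 rmorph_sum /=; apply/eqP; rewrite subr_eq0 -hs; apply/eqP.
  by apply: eq_bigr => i _; rewrite rmorphM /a0 mxE !hg.
apply/matrixP => i j; rewrite !mxE rmorphD rmorphM ft mulr0 addr0 ?mxE hg.
by rewrite (ord1 i).
Qed.

Lemma quot_sr (R S : comPzRingType) (f : {rmorphism R -> S}) (g : S -> R)
  (hg : forall y, f (g y) = y) m : sr_prop R m.+1 -> sr_prop R m -> sr_prop S m.
Proof.
move=> h1 h2 r ur.
have [a [ha ua]] := lift_unimod hg h1 ur.
have [v [z hz]] := h2 a ua.
exists (map_mx f v); exists (map_mx f z).
rewrite -(rmorph1 f) -hz rmorph_sum; apply: eq_bigr => i _.
by rewrite -ha !mxE rmorphM rmorphD rmorphM.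
Qed.

Definition reach (S : comPzRingType) n (C D : 'M[S]_n) := exists e, En e /\ D = C *m e.

Lemma En_mulmx (S : comPzRingType) n (A B : 'M[S]_n) : En A -> En B -> En (A *m B).
Proof.
move=> hA; elim=> [|B' i j a hB' IH hij]; first by rewrite mulmx1.
by rewrite mulmxA; apply: En_mul.
Qed.

Lemma reach_refl (S : comPzRingType) n (C : 'M[S]_n) : reach C C.
Proof. by exists 1%:M; split; [exact: En_one | rewrite mulmx1]. Qed.

Lemma reach_trans (S : comPzRingType) n (C D E : 'M[S]_n) :
  reach C D -> reach D E -> reach C E.
Proof.
move=> [e1 [h1 ->]] [e2 [h2 ->]]; exists (e1 *m e2); split.
  exact: En_mulmx.
by rewrite mulmxA.
Qed.

Lemma reach_elem (S : comPzRingType) n (C : 'M[S]_n) i j a :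
  i != j -> reach C (C *m elem_mx i j a).
Proof.
move=> hij; exists (elem_mx i j a); split => //.
by rewrite -[elem_mx i j a]mul1mx; apply: En_mul => //; exact: En_one.
Qed.

Lemma elem_mxE (S : comPzRingType) n (i j x y : 'I_n) (a : S) :
  elem_mx i j a x y = (x == y)%:R + a * ((x == i) && (y == j))%:R.
Proof. by rewrite !mxE. Qed.

Lemma sum_delta (S : comPzRingType) n (K : 'I_n) (F : 'I_n -> S) :
  \sum_(l < n) (l == K)%:R * F l = F K.
Proof.
rewrite (bigD1 K) //= eqxx mul1r big1 ?addr0 // => l /negbTE ->; exact: mul0r.
Qed.

Lemma sum_delta' (S : comPzRingType) n (K : 'I_n) (F : 'I_n -> S) :
  \sum_(l < n) (K == l)%:R * F l = F K.
Proof. by rewrite -(sum_delta K); apply: eq_bigr => l _; rewrite eq_sym. Qed.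

Lemma mul_elem (S : comPzRingType) n (C : 'M[S]_n) i j a x y :
  (C *m elem_mx i j a) x y = C x y + (y == j)%:R * (a * C x i).
Proof.
rewrite /elem_mx mulmxDr mulmx1 -scalemxAr !mxE (bigD1 i) //= big1 => [|l /negbTE hl]; last first.
  by rewrite !mxE hl /= mulr0.
rewrite !mxE eqxx /= addr0; case: (y == j); rewrite /= ?mulr1 ?mul1r ?mulr0 ?mul0r //; ring.
Qed.

Lemma det_elem (S : comPzRingType) n (i j : 'I_n) (a : S) : i != j -> \det (elem_mx i j a) = 1.
Proof.
move=> hij.
have key : forall (M : 'M[S]_n) (p q : 'I_n), (q < p)%N ->
    (forall x y, M x y = (x == y)%:R + a * ((x == p) && (y == q))%:R) -> \det M = 1.
  move=> M p q hqp hM; rewrite det_trig.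
    rewrite big1 // => x _; rewrite hM eqxx.
    case: (x =P p) => [->|] /=; last by rewrite mulr0 addr0.
    have -> : (p == q) = false by apply/negbTE; apply/eqP => hpq; move: hqp; rewrite hpq ltnn.
    by rewrite mulr0 addr0.
  apply/is_trig_mxP => x y hxy; rewrite hM.
  have -> : (x == y) = false by apply/negbTE; apply/eqP => e; move: hxy; rewrite e ltnn.
  case: (x =P p) => [e|] /=; last by rewrite mulr0 addr0.
  case: (y =P q) => [e'|] /=; last by rewrite mulr0 addr0.
  by move: hxy hqp; rewrite e e'; lia.
case: (ltngtP i j) => h.
- rewrite -det_tr; apply: (key _ j i h) => x y; rewrite !mxE.
  by rewrite (eq_sym y x) andbC.
- by apply: (key _ i j h) => x y; rewrite elem_mxE.
- by move: hij; rewrite -val_eqE /= h eqxx.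
Qed.

Lemma En_det (S : comPzRingType) n (e : 'M[S]_n) : En e -> \det e = 1.
Proof.
elim=> [|A i j a _ IH hij]; first exact: det1.
by rewrite det_mulmx IH det_elem // mulr1.
Qed.

Lemma reach_det (S : comPzRingType) n (C D : 'M[S]_n) : reach C D -> \det D = \det C.
Proof. by move=> [e [he ->]]; rewrite det_mulmx (En_det he) mulr1. Qed.

Lemma colop1 (S : comPzRingType) n (C : 'M[S]_n) (p : 'I_n) (w : 'I_n -> S) :
  w p = 0 -> reach C (\matrix_(x, y) (C x y + w y * C x p)).
Proof.
move=> hw.
suff H : forall k, (k <= n)%N ->
    reach C (\matrix_(x, y) (C x y + (if (y < k)%N then w y else 0) * C x p)).
  have := H n (leqnn n); congr reach; apply/matrixP => x y; rewrite !mxE ltn_ord //.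
elim=> [_|k IH hk].
  have -> : (\matrix_(x, y) (C x y + (if (y < 0)%N then w y else 0) * C x p)) = C.
    by apply/matrixP => x y; rewrite !mxE /= mul0r addr0.
  exact: reach_refl.
pose K := Ordinal hk.
apply: (reach_trans (IH (ltnW hk))).
case: (eqVneq p K) => [epK|neK].
  have -> : (\matrix_(x, y) (C x y + (if (y < k.+1)%N then w y else 0) * C x p)) =
    (\matrix_(x, y) (C x y + (if (y < k)%N then w y else 0) * C x p)).
    apply/matrixP => x y; rewrite !mxE ltnS leq_eqVlt.
    case: (y =P K :> nat) => [ey|] /=.
      have -> : y = p by apply: val_inj; rewrite /= ey epK.
      by rewrite hw; case: ifP.
    by [].
  exact: reach_refl.
have -> : (\matrix_(x, y) (C x y + (if (y < k.+1)%N then w y else 0) * C x p)) =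
  (\matrix_(x, y) (C x y + (if (y < k)%N then w y else 0) * C x p)) *m elem_mx p K (w K).
  apply/matrixP => x y; rewrite mul_elem !mxE.
  have -> : (if (p < k)%N then w p else 0) = 0 by rewrite hw; case: ifP.
  rewrite mul0r addr0 ltnS leq_eqVlt.
  case: (y =P K) => [->|/eqP hy] /=; first by rewrite eqxx ltnn /=; ring.
  have -> : (y == k :> nat) = false by apply/negbTE; exact: hy.
  by rewrite /= mul0r addr0.
exact: reach_elem.
Qed.

Lemma colop2 (S : comPzRingType) n (C : 'M[S]_n) (p : 'I_n) (w : 'I_n -> S) :
  w p = 0 -> reach C (\matrix_(x, y) (C x y + (y == p)%:R * \sum_l w l * C x l)).
Proof.
move=> hw.
suff H : forall k, (k <= n)%N ->
    reach C (\matrix_(x, y) (C x y + (y == p)%:R * \sum_(l < n) (if (l < k)%N then w l else 0) * C x l)).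
  have := H n (leqnn n); congr reach; apply/matrixP => x y; rewrite !mxE.
  by congr (_ + _ * _); apply: eq_bigr => l _; rewrite ltn_ord.
elim=> [_|k IH hk].
  have -> : (\matrix_(x, y) (C x y + (y == p)%:R * \sum_(l < n) (if (l < 0)%N then w l else 0) * C x l)) = C.
    by apply/matrixP => x y; rewrite !mxE big1 ?mulr0 ?addr0 // => l _; rewrite mul0r.
  exact: reach_refl.
pose K := Ordinal hk.
apply: (reach_trans (IH (ltnW hk))).
have split_sum : forall x, \sum_(l < n) (if (l < k.+1)%N then w l else 0) * C x l =
   \sum_(l < n) (if (l < k)%N then w l else 0) * C x l + w K * C x K.
  move=> x; rewrite -(sum_delta K (fun l => w l * C x l)) -big_split /=.
  apply: eq_bigr => l _; rewrite ltnS leq_eqVlt.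
  case: (l =P K) => [->|/eqP hl] /=; first by rewrite eqxx ltnn mul1r mul0r add0r.
  have -> : (l == k :> nat) = false by apply/negbTE; exact: hl.
  by rewrite /= mul0r addr0.
case: (eqVneq K p) => [eKp|neK].
  have -> : (\matrix_(x, y) (C x y + (y == p)%:R * \sum_(l < n) (if (l < k.+1)%N then w l else 0) * C x l)) =
    (\matrix_(x, y) (C x y + (y == p)%:R * \sum_(l < n) (if (l < k)%N then w l else 0) * C x l)).
    by apply/matrixP => x y; rewrite !mxE split_sum eKp hw mul0r addr0.
  exact: reach_refl.
have -> : (\matrix_(x, y) (C x y + (y == p)%:R * \sum_(l < n) (if (l < k.+1)%N then w l else 0) * C x l)) =
  (\matrix_(x, y) (C x y + (y == p)%:R * \sum_(l < n) (if (l < k)%N then w l else 0) * C x l)) *m elem_mx K p (w K).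
  apply/matrixP => x y; rewrite mul_elem !mxE split_sum.
  rewrite (negbTE neK) mul0r addr0; ring.
exact: reach_elem.
Qed.

Lemma sum_narrow (S : comPzRingType) k n (h : (k <= n)%N) (F : 'I_n -> S) :
  (forall l : 'I_n, (k <= l)%N -> F l = 0) ->
  \sum_(l < n) F l = \sum_(l < k) F (widen_ord h l).
Proof.
move=> hF; rewrite (bigID (fun l : 'I_n => (l < k)%N)) /= [X in _ + X]big1 ?addr0.
  by rewrite big_ord_narrow.
by move=> l; rewrite -leqNgt; exact: hF.
Qed.

Definition extn (T : comPzRingType) j n (v : 'rV[T]_j) (y : 'I_n) : T :=
  if (insub (val y) : option 'I_j) is Some l then v 0 l else 0.

Lemma extn_w (T : comPzRingType) j n (h : (j <= n)%N) (v : 'rV[T]_j) (l : 'I_j) :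
  extn v (widen_ord h l) = v 0 l.
Proof. by rewrite /extn /= valK. Qed.

Lemma extn_ge (T : comPzRingType) j n (v : 'rV[T]_j) (y : 'I_n) :
  (j <= y)%N -> extn v y = 0.
Proof. by move=> h; rewrite /extn insubN // -leqNgt. Qed.

Definition idout (S : comPzRingType) n j (C : 'M[S]_n) :=
  forall x y : 'I_n, (j <= x)%N || (j <= y)%N -> C x y = (x == y)%:R.

Lemma det2 (T : comPzRingType) (M : 'M[T]_2) :
  \det M = M 0 0 * M 1 1 - M 0 1 * M 1 0.
Proof.
rewrite (expand_det_row _ 0) !big_ord_recl big_ord0 /cofactor !det_mx11 !mxE /=.
have e1 : lift (0 : 'I_2) (0 : 'I_1) = 1 by apply: val_inj.
have e2 : lift (ord0 : 'I_2) (0 : 'I_1) = 1 by apply: val_inj.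
have e3 : lift (ord0 : 'I_2) (ord0 : 'I_1) = 1 by apply: val_inj.
have e4 : lift (1 : 'I_2) (0 : 'I_1) = 0 by apply: val_inj.
have e5 : (ord0 : 'I_2) = 0 by apply: val_inj.
rewrite ?e1 ?e2 ?e3 ?e4 ?e5 /= add0n expr0 /bump /= expr1; ring.
Qed.

Definition i1 d : 'I_d.+2 := @Ordinal d.+2 1 isT.

Lemma det_idout2 (T : comPzRingType) d (M : 'M[T]_d.+2) : idout 2 M ->
  \det M = M ord0 ord0 * M (i1 d) (i1 d) - M ord0 (i1 d) * M (i1 d) ord0.
Proof.
move=> hM.
have E : (M : 'M_(2 + d)) = block_mx (ulsubmx (M : 'M_(2 + d))) (ursubmx (M : 'M_(2 + d))) 0 1%:M.
  rewrite -{1}(submxK (M : 'M_(2 + d))); congr block_mx; apply/matrixP => x y; rewrite !mxE.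
    rewrite hM; last by apply/orP; left; rewrite /= leq_addr.
    have -> : (rshift 2 x == lshift d y) = false.
      by apply/negbTE; rewrite -val_eqE /=; have := ltn_ord y; lia.
    by [].
  rewrite hM; last by apply/orP; left; rewrite /= leq_addr.
  by rewrite -!val_eqE /= eqn_add2l.
transitivity (\det (block_mx (ulsubmx (M : 'M_(2 + d))) (ursubmx (M : 'M_(2 + d))) 0 (1%:M : 'M_d))).
  by rewrite -E.
rewrite det_ublock det1 mulr1 det2 !mxE.
have l0 : lshift d (0 : 'I_2) = ord0 by apply: val_inj.
have l1 : lshift d (1 : 'I_2) = i1 d by apply: val_inj.
by rewrite l0 l1.
Qed.

Lemma base (R S : comPzRingType) (f : {rmorphism R -> S}) (g : S -> R)
  (hg : forall y, f (g y) = y) (hsr2 : sr_prop R 2) d (C : 'M[S]_d.+2) :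
  idout 2 C -> \det C = 1 -> exists A : 'M[R]_d.+2, \det A = 1 /\ reach C (map_mx f A).
Proof.
move=> hC dC.
rewrite det_idout2 // in dC.
set x := C ord0 ord0 in dC *; set q := C (i1 d) (i1 d) in dC *.
set p := C ord0 (i1 d) in dC *; set y := C (i1 d) ord0 in dC *.
pose r : 'rV[S]_2 := \row_(k < 2) (if k == 0 then p else q).
have ur : unimodular r.
  exists (\row_(k < 2) (if k == 0 then -y else x)).
  rewrite !big_ord_recl big_ord0 !mxE /=.
  by rewrite addr0 -dC; ring.
have [a [ha [uv hu]]] := lift_unimod hg hsr2 ur.
set a0 := a 0 0 in hu *; set a1 := a 0 1 in hu *.
set u := uv 0 0 in hu *; set w := uv 0 1 in hu *.
have hu' : u * a0 + w * a1 = 1.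
  have e0 : (ord0 : 'I_2) = 0 by apply: val_inj.
  have e1 : (lift ord0 ord0 : 'I_2) = 1 by apply: val_inj.
  by rewrite -hu !big_ord_recl big_ord0 addr0 e1 e0.
have fa0 : f a0 = p by move: (congr1 (fun M : 'rV[S]_2 => M 0 0) ha); rewrite !mxE.
have fa1 : f a1 = q by move: (congr1 (fun M : 'rV[S]_2 => M 0 1) ha); rewrite !mxE.
pose A : 'M[R]_d.+2 := \matrix_(X, Y) (if (X < 2)%N && (Y < 2)%N then
   (if X == 0 :> nat then (if Y == 0 :> nat then w else a0) else (if Y == 0 :> nat then -u else a1))
   else (X == Y)%:R).
exists A; split.
  rewrite det_idout2; last first.
    move=> X Y h; rewrite mxE; case: ifP => // /andP [h1 h2]; move: h h1 h2; lia.
  rewrite !mxE /= -hu'; ring.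
have hH1 : f u * p + f w * q = 1.
  by rewrite -fa0 -fa1 -!rmorphM -rmorphD hu' rmorph1.
pose c := (f w - x) * f u + (- f u - y) * f w.
have -> : map_mx f A = C *m elem_mx (i1 d) ord0 c.
  apply/matrixP => X Y; rewrite mul_elem !mxE.
  have v0 : nat_of_ord (ord0 : 'I_d.+2) = 0%N by [].
  have v1 : nat_of_ord (i1 d) = 1%N by [].
  have [->|nX0] := eqVneq X ord0.
    have [->|nY0] := eqVneq Y ord0.
      rewrite !v0 /= mul1r -/x -/p; apply/eqP; rewrite eq_sym -subr_eq0; apply/eqP.
      have -> : x + c * p - f w = (f w - x) * (f u * p + f w * q - 1)
          + f w * ((x * q - p * y) - (f u * p + f w * q)) by rewrite /c; ring.
      by rewrite hH1 dC !subrr !mulr0 addr0.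
    have [->|nY1] := eqVneq Y (i1 d).
      by rewrite ?v0 ?v1 /= mul0r addr0.
    have hY : (2 <= Y)%N.
      by move: nY0 nY1; rewrite -!val_eqE /=; lia.
    rewrite hC ?hY ?orbT //.
    have -> : (Y < 2)%N = false by lia.
    by rewrite andbF rmorph_nat /= mul0r addr0 eq_sym (negbTE nY0).
  have [->|nX1] := eqVneq X (i1 d).
    have [->|nY0] := eqVneq Y ord0.
      rewrite ?v0 ?v1 /= mul1r -/y -/q rmorphN; apply/eqP; rewrite eq_sym -subr_eq0; apply/eqP.
      have -> : y + c * q - - f u = f u * ((f u * p + f w * q) - (x * q - p * y))
          + (- f u - y) * (f u * p + f w * q - 1) by rewrite /c; ring.
      by rewrite hH1 dC !subrr !mulr0 addr0.
    have [->|nY1] := eqVneq Y (i1 d).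
      by rewrite ?v0 ?v1 /= mul0r addr0.
    have hY : (2 <= Y)%N.
      by move: nY0 nY1; rewrite -!val_eqE /=; lia.
    rewrite hC ?hY ?orbT //.
    have -> : (Y < 2)%N = false by lia.
    rewrite andbF rmorph_nat /= mul0r addr0.
    by have -> : (i1 d == Y) = false by rewrite -val_eqE /=; lia.
  have hX : (2 <= X)%N.
    by move: nX0 nX1; rewrite -!val_eqE /=; lia.
  rewrite hC ?hX // hC ?hX //.
  have -> : (X == i1 d) = false by exact: negbTE.
  have -> : (X < 2)%N = false by lia.
  by rewrite /= rmorph_nat mulr0 mulr0 addr0.
apply: reach_elem.
by rewrite -val_eqE.
Qed.

Lemma step (S : comPzRingType) (hsrS : forall m, (2 <= m)%N -> sr_prop S m)
  n j (hj : (2 <= j)%N) (hjn : (j < n)%N) (C : 'M[S]_n) :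
  idout j.+1 C -> \det C = 1 ->
  exists C', reach C C' /\ idout j C' /\ \det C' = 1.
Proof.
move=> hC dC.
pose J := Ordinal hjn.
have vJ : nat_of_ord J = j by [].
have neqJ : forall y : 'I_n, (y == J) = (nat_of_ord y == j) by [].
have CJ : forall y : 'I_n, (j < y)%N -> C J y = 0.
  move=> y hy; rewrite hC; last by apply/orP; right.
  by have -> : (J == y) = false by rewrite eq_sym neqJ; apply/negbTE; lia.
have ur : unimodular (\row_(l < j.+1) C J (widen_ord hjn l)).
  exists (\row_(l < j.+1) cofactor C J (widen_ord hjn l)).
  rewrite -dC (expand_det_row C J) (sum_narrow hjn); last first.
    by move=> l hl; rewrite CJ // mul0r.
  by apply: eq_bigr => l _; rewrite !mxE mulrC.
have [s [z hz]] := hsrS j hj _ ur.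
have hz' : \sum_(i < j) z 0 i * (C J (widen_ord (ltnW hjn) i) + s 0 i * C J J) = 1.
  rewrite -hz; apply: eq_bigr => i _; rewrite !mxE.
  have -> : widen_ord hjn (widen_ord (leqnSn j) i) = widen_ord (ltnW hjn) i by apply: val_inj.
  by have -> : widen_ord hjn ord_max = J by apply: val_inj.
have hjJ : (j <= J)%N by rewrite vJ.
pose C1 := \matrix_(x, y) (C x y + extn s y * C x J).
have r1 : reach C C1 by apply: colop1; exact: extn_ge.
have hC1 : forall x y : 'I_n, (j < x)%N || (j < y)%N -> C1 x y = (x == y)%:R.
  move=> x y /orP [hx|hy]; rewrite mxE.
    rewrite (hC x J); last by apply/orP; left.
    have -> : (x == J) = false by rewrite neqJ; apply/negbTE; lia.
    by rewrite mulr0 addr0 hC //; apply/orP; left.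
  by rewrite extn_ge ?mul0r ?addr0 ?hC //; [apply/orP; right | lia].
have hsum1 : \sum_(l < n) extn z l * C1 J l = 1.
  rewrite (sum_narrow (ltnW hjn)); last by move=> l hl; rewrite extn_ge // mul0r.
  by rewrite -hz'; apply: eq_bigr => i _; rewrite !extn_w mxE extn_w.
pose w4 := fun l : 'I_n => (1 - C1 J J) * extn z l.
pose C2 := \matrix_(x, y) (C1 x y + (y == J)%:R * \sum_(l < n) w4 l * C1 x l).
have r2 : reach C1 C2 by apply: colop2; rewrite /w4 extn_ge // mulr0.
have hC2J : C2 J J = 1.
  rewrite mxE eqxx mul1r.
  have -> : \sum_(l < n) w4 l * C1 J l = (1 - C1 J J) * \sum_(l < n) extn z l * C1 J l.
    by rewrite big_distrr; apply: eq_bigr => l _; rewrite /w4 /= mulrA.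
  by rewrite hsum1 mulr1 addrC subrK.
have hC2 : forall x y : 'I_n, (j < x)%N || (j < y)%N -> C2 x y = (x == y)%:R.
  move=> x y /orP [hx|hy]; rewrite mxE.
    rewrite hC1; last by apply/orP; left.
    rewrite big1 ?mulr0 ?addr0 // => l _.
    case: (ltnP l j) => hl.
      rewrite hC1; last by apply/orP; left.
      have -> : (x == l) = false by apply/negbTE; rewrite -val_eqE /=; lia.
      by rewrite /= mulr0.
    by rewrite /w4 extn_ge // mulr0 mul0r.
  have -> : (y == J) = false by rewrite neqJ; apply/negbTE; lia.
  by rewrite mul0r addr0 hC1 //; apply/orP; right.
pose w5 := fun l : 'I_n => if (l < j)%N then - C2 J l else 0.
pose C3 := \matrix_(x, y) (C2 x y + w5 y * C2 x J).
have r3 : reach C2 C3 by apply: colop1; rewrite /w5 vJ ltnn.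
have hC3 : forall x y : 'I_n, (j < x)%N || (j < y)%N -> C3 x y = (x == y)%:R.
  move=> x y /orP [hx|hy]; rewrite mxE.
    rewrite (hC2 x J); last by apply/orP; left.
    have -> : (x == J) = false by rewrite neqJ; apply/negbTE; lia.
    by rewrite mulr0 addr0 hC2 //; apply/orP; left.
  have -> : w5 y = 0 by rewrite /w5; have -> : (y < j)%N = false by lia.
  by rewrite mul0r addr0 hC2 //; apply/orP; right.
have hC3J : forall y : 'I_n, C3 J y = (J == y)%:R.
  move=> y; case: (ltngtP y j) => hy.
  - rewrite mxE /w5 hy hC2J mulr1 subrr.
    by have -> : (J == y) = false by rewrite eq_sym neqJ; apply/negbTE; lia.
  - by rewrite hC3 //; apply/orP; right.
  - have -> : y = J by apply: val_inj.
    by rewrite mxE /w5 vJ ltnn mul0r addr0 hC2J eqxx.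
have rowC3 : forall x : 'I_n, (j <= x)%N -> forall y, C3 x y = (x == y)%:R.
  move=> x hx y; case: (ltngtP x j) => h; first lia.
    by rewrite hC3 //; apply/orP; left.
  by have -> : x = J by apply: val_inj.
have r03 : reach C C3 by apply: (reach_trans r1); apply: (reach_trans r2).
have dC3 : \det C3 = 1 by rewrite (reach_det r03).
pose W := \adj C3.
have hCW : forall x y : 'I_n, \sum_(l < n) C3 x l * W l y = (x == y)%:R.
  move=> x y; have := congr1 (fun M : 'M[S]_n => M x y) (mul_mx_adj C3).
  by rewrite dC3 !mxE.
have hW : forall l : 'I_n, (j <= l)%N -> W l J = (l == J)%:R.
  move=> l hl; rewrite -hCW.
  rewrite (eq_bigr (fun k => (l == k)%:R * W k J)); last by move=> k _; rewrite rowC3.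
  by rewrite sum_delta'.
pose w6 := fun l : 'I_n => if (l < j)%N then W l J else 0.
pose C4 := \matrix_(x, y) (C3 x y + (y == J)%:R * \sum_(l < n) w6 l * C3 x l).
have r4 : reach C3 C4 by apply: colop2; rewrite /w6 vJ ltnn.
have r04 : reach C C4 by apply: (reach_trans r03).
exists C4; split => //; split; last by rewrite (reach_det r04).
move=> x y hxy; rewrite mxE.
case: (eqVneq y J) => [eyJ|nyJ].
  rewrite eyJ (_ : true%:R = 1) // mul1r.
  have <- : \sum_(l < n) C3 x l * W l J = (x == J)%:R by rewrite hCW.
  rewrite -(sum_delta J (fun l => C3 x l)) -big_split /=.
  apply: eq_bigr => l _; rewrite /w6.
  case: ltnP => hl.
    have -> : (l == J) = false by rewrite neqJ; apply/negbTE; lia.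
    by rewrite mul0r add0r mulrC.
  by rewrite hW // mul0r addr0 mulrC.
rewrite (_ : false%:R = 0) // mul0r addr0.
case/orP: hxy => h.
  by rewrite rowC3.
rewrite hC3 //; apply/orP; right.
by move: nyJ; rewrite neqJ; lia.
Qed.

Lemma main_ind (R S : comPzRingType) (f : {rmorphism R -> S}) (g : S -> R)
  (hg : forall y, f (g y) = y) (hsr : forall m, (2 <= m)%N -> sr_prop R m)
  (hsrS : forall m, (2 <= m)%N -> sr_prop S m) n :
  forall j, (2 <= j <= n)%N -> forall C : 'M[S]_n, idout j C -> \det C = 1 ->
  exists A : 'M[R]_n, \det A = 1 /\ reach C (map_mx f A).
Proof.
elim=> [|j IH]; first by [].
move=> /andP [hj hjn] C hC dC.
case: (ltnP j 2) => hj2.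
  have ej : j.+1 = 2%N by lia.
  rewrite ej in hC.
  destruct n as [|[|d]]; try lia.
  exact: (base hg (hsr 2%N isT) hC dC).
have [C' [r [hC' dC']]] := step hsrS hj2 hjn hC dC.
have hj' : (2 <= j <= n)%N by rewrite hj2 ltnW.
have [A [dA rA]] := IH hj' C' hC' dC'.
by exists A; split => //; apply: reach_trans r rA.
Qed.

Lemma stab_id (T : comPzRingType) n (X : 'M[T]_n) : stab n X = X.
Proof. by apply/matrixP => i j; rewrite mxE /stab_entry !valK. Qed.

Theorem mainTheorem4 (R : comPzRingType) (I : R -> Prop) (S : comPzRingType)
    (f : {rmorphism R -> S}) :
  sr_le R 2 ->
  is_ideal I ->
  (forall y : S, exists x : R, f x = y) ->
  (forall x : R, f x = 0 <-> I x) ->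
  forall (n : nat) (B : 'M[S]_n), \det B = 1 ->
  exists (m : nat) (A : 'M[R]_m), \det A = 1 /\
    exists k : nat, (n <= k)%N /\ (m <= k)%N /\
      exists e : 'M[S]_k, En e /\ stab k (map_mx f A) = stab k B *m e.
Proof.
move=> [n0 [hn0 hsr0]] _ hsurj _ n B dB.
have hs' : forall y, exists x, f x == y.
  by move=> y; have [x hx] := hsurj y; exists x; rewrite hx.
pose g := fun y => xchoose (hs' y).
have hg : forall y, f (g y) = y by move=> y; apply/eqP; exact: (xchooseP (hs' y)).
have hsr : forall m, (2 <= m)%N -> sr_prop R m.
  move=> m hm; apply: (sr_mono_le hsr0); lia.
have hsrS : forall m, (2 <= m)%N -> sr_prop S m.
  move=> m hm; apply: (quot_sr hg); apply: hsr; lia.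
exists n.
case: (ltnP n 2) => hn.
  exists 1%:M; split; first exact: det1.
  exists n; split => //; split => //.
  exists 1%:M; split; first exact: En_one.
  rewrite !stab_id mulmx1 map_mx1.
  destruct n as [|[|d]]; try lia.
    by apply/matrixP => i; case: i.
  apply/matrixP => i j; rewrite !ord1 -dB det_mx11 !mxE.
  by rewrite eqxx mulr1n.
have hjn : (2 <= n <= n)%N by rewrite hn leqnn.
have hB : idout n B by move=> x y; rewrite [(n <= x)%N]leqNgt [(n <= y)%N]leqNgt !ltn_ord.
have [A [dA [e [he hA]]]] := main_ind hg hsr hsrS hjn hB dB.
exists A; split => //; exists n; split => //; split => //.
by exists e; split => //; rewrite !stab_id.
Qed.
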